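(* Let $0<\underline\theta<\overline\theta<\infty$ and let the buyer of type $\theta\in[\underline\theta,\overline\theta]$ have utility $u(t,q;\theta)=\theta q-qt$ on $\mathbb{Z}$. Let $\theta$ have distribution $\Gamma$ with continuous, strictly positive density $\gamma$ on $[\underline\theta,\overline\theta]$, with nondecreasing hazard rate: $\frac{\gamma(\theta')}{1-\Gamma(\theta')}\le\frac{\gamma(\theta'')}{1-\Gamma(\theta'')}$ for $\theta'<\theta''$. Let $\mathcal F$ be the set of mechanisms $F=(t,q):[\underline\theta,\overline\theta]\to[0,\overline\theta]\times[0,1]$ with finite range that are strategy-proof ($u(F(\theta);\theta)\ge u(F(\theta');\theta)$ for all $\theta,\theta'$), individually rational ($u(F(\theta);\theta)\ge0$), and satisfy: $u(F(\theta);\theta)=0$ implies $F(\theta)=(0,0)$. The seller's expected revenue is $E(F)=\int_{\underline\theta}^{\overline\theta}q(\theta)t(\theta)\gamma(\theta)\,d\theta$. Then a revenue-maximizing $F^*\in\mathcal F$ exists and is deterministic: there is $\theta^*\in[\underline\theta,\overline\theta]$ with $F^*(\theta)=(0,0)$ for $\theta\in[\underline\theta,\theta^*]$ and $F^*(\theta)=(\theta^*,1)$ for $\theta\in(\theta^*,\overline\theta]$.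
   Context: $\mathbb{Z}=[0,\infty)\times[0,1]$; $q$ is the probability of winning an indivisible object, $t$ is the payment made upon winning, and $\theta$ is the valuation. *)

(* Defs.v *)
From Stdlib Require Import Reals List.
From Coquelicot Require Import Coquelicot.
Open Scope R_scope.

Definition util (t q theta : R) : R := theta * q - q * t.

Definition cont_on (a b : R) (f : R -> R) : Prop :=
  forall x, a <= x <= b -> forall eps, 0 < eps -> exists delta, 0 < delta /\
    forall y, a <= y <= b -> Rabs (y - x) < delta -> Rabs (f y - f x) < eps.

Definition cdf (lo : R) (gamma : R -> R) (theta : R) : R := RInt gamma lo theta.

Definition admissible (lo hi : R) (t q : R -> R) : Prop :=
  (forall th, lo <= th <= hi -> 0 <= t th <= hi /\ 0 <= q th <= 1) /\
  (exists l : list (R * R), forall th, lo <= th <= hi -> In (t th, q th) l) /\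
  (forall th th', lo <= th <= hi -> lo <= th' <= hi ->
     util (t th') (q th') th <= util (t th) (q th) th) /\
  (forall th, lo <= th <= hi -> 0 <= util (t th) (q th) th) /\
  (forall th, lo <= th <= hi -> util (t th) (q th) th = 0 -> t th = 0 /\ q th = 0).

Definition revenue (lo hi : R) (gamma t q : R -> R) : R :=
  RInt (fun th => q th * t th * gamma th) lo hi.

(* Main.v *)
Require Import Defs.
From Stdlib Require Import Reals List Lra.
From Coquelicot Require Import Coquelicot.
Open Scope R_scope.

Definition clamp (lo hi x : R) := Rmax lo (Rmin hi x).

Lemma clamp_in lo hi x : lo <= hi -> lo <= clamp lo hi x <= hi.
Proof. intros; unfold clamp, Rmax, Rmin; repeat destruct Rle_dec; lra. Qed.

Lemma clamp_id lo hi x : lo <= x <= hi -> clamp lo hi x = x.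
Proof. intros; unfold clamp, Rmax, Rmin; repeat destruct Rle_dec; lra. Qed.

Lemma clamp_lip lo hi x y : lo <= hi -> Rabs (clamp lo hi y - clamp lo hi x) <= Rabs (y - x).
Proof. intros; unfold clamp, Rmax, Rmin; repeat destruct Rle_dec;
  unfold Rabs; repeat destruct Rcase_abs; lra. Qed.

Lemma clamp_cont lo hi gamma : lo <= hi -> cont_on lo hi gamma ->
  forall x, continuous (fun y => gamma (clamp lo hi y)) x.
Proof.
  intros Hl Hc x. apply filterlim_locally. intros eps.
  destruct (Hc (clamp lo hi x) (clamp_in lo hi x Hl) eps (cond_pos eps)) as [d [Hd H]].
  exists (mkposreal d Hd). intros y Hy.
  change (Rabs (gamma (clamp lo hi y) - gamma (clamp lo hi x)) < eps).
  change (Rabs (y - x) < d) in Hy.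
  apply H. apply clamp_in; auto. pose proof (clamp_lip lo hi x y Hl). lra.
Qed.

Lemma RInt_scalR g a b K : ex_RInt g a b -> RInt (fun x => K * g x) a b = K * RInt g a b.
Proof. intros H. exact (RInt_scal g a b K H). Qed.
Lemma ex_RInt_scalR g a b K : ex_RInt g a b -> ex_RInt (fun x => K * g x) a b.
Proof. intros H. exact (ex_RInt_scal g a b K H). Qed.
Lemma RInt_zero a b : RInt (fun _ => 0) a b = 0.
Proof. rewrite RInt_const. unfold scal; simpl; unfold mult; simpl. ring. Qed.
Lemma RInt_ChaslesR f a b c : ex_RInt f a b -> ex_RInt f b c -> RInt f a b + RInt f b c = RInt f a c.
Proof. intros. exact (RInt_Chasles f a b c H H0). Qed.
Lemma RInt_plusR f g a b : ex_RInt f a b -> ex_RInt g a b -> RInt (fun x => f x + g x) a b = RInt f a b + RInt g a b.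
Proof. intros. exact (RInt_plus f g a b H H0). Qed.
Lemma ex_RInt_plusR f g a b : ex_RInt f a b -> ex_RInt g a b -> ex_RInt (fun x => f x + g x) a b.
Proof. intros. exact (ex_RInt_plus f g a b H H0). Qed.

Lemma step_int (g f : R -> R) lo c hi K : lo <= c <= hi -> ex_RInt g lo hi ->
  (forall x, lo < x < c -> f x = 0) -> (forall x, c < x < hi -> f x = K * g x) ->
  ex_RInt f lo hi /\ RInt f lo hi = K * RInt g c hi.
Proof.
  intros Hc Hg H0 H1.
  assert (Gc : ex_RInt g c hi) by (apply (@ex_RInt_Chasles_2 R_CompleteNormedModule g lo c hi); auto).
  assert (E1 : ex_RInt f lo c).
  { apply (@ex_RInt_ext R_NormedModule (fun _ => 0)). intros x Hx.
    rewrite Rmin_left in Hx by lra. rewrite Rmax_right in Hx by lra. symmetry; apply H0; lra.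
    apply ex_RInt_const. }
  assert (E2 : ex_RInt f c hi).
  { apply (@ex_RInt_ext R_NormedModule (fun x => K * g x)). intros x Hx.
    rewrite Rmin_left in Hx by lra. rewrite Rmax_right in Hx by lra. rewrite H1 by lra. reflexivity.
    apply ex_RInt_scalR; exact Gc. }
  split. apply (@ex_RInt_Chasles R_NormedModule f lo c hi); auto.
  rewrite <- (RInt_ChaslesR f lo c hi E1 E2).
  rewrite (@RInt_ext R_CompleteNormedModule f (fun _ => 0) lo c).
  rewrite (@RInt_ext R_CompleteNormedModule f (fun x => K * g x) c hi).
  rewrite RInt_zero, RInt_scalR by exact Gc. apply Rplus_0_l.
  intros x Hx. rewrite Rmin_left in Hx by lra. rewrite Rmax_right in Hx by lra. rewrite H1 by lra. reflexivity.
  intros x Hx. rewrite Rmin_left in Hx by lra. rewrite Rmax_right in Hx by lra. apply H0; lra.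
Qed.

From Stdlib Require Import Classical Lia.

Lemma list_max (l : list R) (P : R -> Prop) : (exists x, In x l /\ P x) ->
  exists m, In m l /\ P m /\ forall y, In y l -> P y -> y <= m.
Proof.
  induction l as [|a l IH]; intros [x [Hx Px]]. destruct Hx.
  destruct (classic (exists x, In x l /\ P x)) as [E|NE].
  - destruct (IH E) as [m [Hm [Pm Mm]]].
    destruct (classic (P a /\ m < a)) as [[Pa Ha]|N].
    + exists a. split; [left; auto|split; auto]. intros y [Ey|Hy] Py. subst; lra.
      specialize (Mm y Hy Py); lra.
    + exists m. split; [right; auto|split; auto]. intros y [Ey|Hy] Py; auto. subst y.
      destruct (Rle_dec a m); auto. exfalso; apply N; split; auto; lra.
  - destruct Hx as [Ex|Hx]. 2:{ exfalso; apply NE; eauto. }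
    subst x. exists a. split; [left; auto|split; auto]. intros y [Ey|Hy] Py. subst; lra.
    exfalso; apply NE; eauto.
Qed.

Lemma div_le_aux c D X th : 0 < D -> c * D = X -> X <= th * D -> c <= th.
Proof. intros HD HcD HX. apply Rmult_le_reg_r with D; lra. Qed.
Lemma div_ge_aux c D X th : 0 < D -> c * D = X -> th * D <= X -> th <= c.
Proof. intros HD HcD HX. apply Rmult_le_reg_r with D; lra. Qed.

Lemma layer lo hi g Rstar : lo < hi -> ex_RInt g lo hi -> RInt g lo hi = 1 ->
  (forall c, lo <= c <= hi -> c * RInt g c hi <= Rstar) ->
  forall n (l : list R), (length l <= n)%nat -> forall q p : R -> R,
  (forall th, lo <= th <= hi -> In (q th) l) ->
  (forall th, lo <= th <= hi -> 0 <= q th) ->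
  (forall th th', lo <= th -> th <= th' -> th' <= hi -> q th <= q th') ->
  (forall th th', lo <= th -> th <= th' -> th' <= hi ->
     th * (q th' - q th) <= p th' - p th <= th' * (q th' - q th)) ->
  p lo <= lo * q lo ->
  ex_RInt (fun th => p th * g th) lo hi /\ RInt (fun th => p th * g th) lo hi <= q hi * Rstar.
Proof.
  intros Hlh Hg H1 HR n. induction n as [|n IH]; intros l Hl q p Hin Hq0 Hmon Hpay Hplo.
  { destruct l; [|simpl in Hl; lia]. destruct (Hin lo ltac:(lra)). }
  assert (samep : forall th th', lo <= th -> th <= th' -> th' <= hi -> q th = q th' -> p th = p th').
  { intros th th' a b c e. specialize (Hpay th th' a b c). rewrite e in Hpay.
    replace (q th' - q th') with 0 in Hpay by ring. lra. }
  destruct (classic (exists th, lo <= th <= hi /\ q th < q hi)) as [Ex|NEx].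
  2:{
    assert (Hc : forall th, lo <= th <= hi -> q th = q hi).
    { intros th Hth. destruct (Rlt_dec (q th) (q hi)). exfalso; apply NEx; eauto.
      specialize (Hmon th hi ltac:(lra) ltac:(lra) ltac:(lra)). lra. }
    assert (Hpc : forall th, lo <= th <= hi -> p th = p lo).
    { intros th Hth. symmetry. apply samep; try lra. rewrite (Hc lo), (Hc th) by lra; reflexivity. }
    assert (E : forall x, Rmin lo hi < x < Rmax lo hi -> p lo * g x = p x * g x).
    { intros x Hx. rewrite Rmin_left, Rmax_right in Hx by lra. rewrite (Hpc x) by lra. reflexivity. }
    split.
    - apply (@ex_RInt_ext R_NormedModule (fun x => p lo * g x)); auto. apply ex_RInt_scalR; auto.
    - rewrite <- (@RInt_ext R_CompleteNormedModule _ _ lo hi E). rewrite RInt_scalR by auto.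
      rewrite H1. specialize (HR lo ltac:(lra)). rewrite H1 in HR.
      assert (0 <= q hi) by (apply Hq0; lra). rewrite <- (Hc lo) by lra.
      assert (q lo * lo <= q lo * Rstar) by (apply Rmult_le_compat_l; rewrite ?Hc; lra).
      lra. }
  set (P := fun v => exists th, lo <= th <= hi /\ q th = v /\ v < q hi).
  destruct (list_max l P) as [w [Hwl [[t2 [Ht2 [Hqt2 Hwlt]]] Hwmax]]].
  { destruct Ex as [th [Hth Hlt]]. exists (q th). split. apply Hin; auto. exists th; auto. }
  assert (Hle_w : forall th, lo <= th <= hi -> q th < q hi -> q th <= w).
  { intros th Hth Hlt. apply Hwmax. apply Hin; auto. exists th; auto. }
  set (D := q hi - w). assert (HD : 0 < D) by (unfold D; lra).
  set (c := (p hi - p t2) / D).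
  assert (HcD : c * D = p hi - p t2) by (unfold c; field; lra).
  assert (Q1 : forall th, lo <= th <= hi -> q th = q hi -> c <= th).
  { intros th Hth Hqe. assert (t2 < th).
    { destruct (Rlt_dec t2 th); auto. specialize (Hmon th t2 ltac:(lra) ltac:(lra) ltac:(lra)). lra. }
    specialize (Hpay t2 th ltac:(lra) ltac:(lra) ltac:(lra)).
    rewrite (samep th hi) in Hpay by lra. rewrite Hqe, Hqt2 in Hpay.
    apply (div_le_aux c D (p hi - p t2)); auto. unfold D. lra. }
  assert (Q2 : forall th, lo <= th <= hi -> q th < q hi -> th <= c).
  { intros th Hth Hlt. pose proof (Hle_w th Hth Hlt).
    assert (t2 <= c).
    { specialize (Hpay t2 hi ltac:(lra) ltac:(lra) ltac:(lra)). rewrite Hqt2 in Hpay.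
      apply (div_ge_aux c D (p hi - p t2)); auto. unfold D; lra. }
    destruct (Rle_dec th t2); [lra|].
    specialize (Hmon t2 th ltac:(lra) ltac:(lra) ltac:(lra)).
    assert (Hw : q th = w) by lra.
    specialize (Hpay th hi ltac:(lra) ltac:(lra) ltac:(lra)).
    rewrite <- (samep t2 th) in Hpay by lra. rewrite Hw in Hpay.
    apply (div_ge_aux c D (p hi - p t2)); auto. unfold D. lra. }
  assert (Hc : lo <= c <= hi).
  { split. assert (q lo < q hi).
    { destruct Ex as [th [Hth Hlt]]. specialize (Hmon lo th ltac:(lra) ltac:(lra) ltac:(lra)). lra. }
    apply Q2; lra. apply Q1; lra. }
  set (q' := fun th => if Rlt_dec (q th) (q hi) then q th else w).
  set (p' := fun th => if Rlt_dec (q th) (q hi) then p th else p t2).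
  destruct (IH (remove Req_EM_T (q hi) l)) with (q := q') (p := p') as [IE IB].
  - pose proof (remove_length_lt Req_EM_T l (q hi) (Hin hi ltac:(lra))). lia.
  - intros th Hth. unfold q'. destruct Rlt_dec. apply in_in_remove. lra. auto.
    apply in_in_remove. lra. auto.
  - intros th Hth. unfold q'. destruct Rlt_dec. auto. rewrite <- Hqt2. auto.
  - intros th th' a b e. unfold q'. destruct (Rlt_dec (q th) (q hi)); destruct (Rlt_dec (q th') (q hi)).
    + auto.
    + apply Hle_w; auto; lra.
    + specialize (Hmon th th' a b e). lra.
    + lra.
  - intros th th' a b e. unfold q', p'. destruct (Rlt_dec (q th) (q hi)); destruct (Rlt_dec (q th') (q hi)).
    + auto.
    + destruct (Rle_dec th t2).
      * specialize (Hpay th t2 a r0 ltac:(lra)). rewrite Hqt2 in Hpay.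
        assert (t2 <= th').
        { destruct (Rle_dec t2 th'); auto. specialize (Hmon th' t2 ltac:(lra) ltac:(lra) ltac:(lra)). lra. }
        assert (q th <= w) by (apply Hle_w; auto; lra).
        assert (t2 * (w - q th) <= th' * (w - q th)) by (apply Rmult_le_compat_r; lra). lra.
      * specialize (Hmon t2 th ltac:(lra) ltac:(lra) ltac:(lra)).
        assert (q th = w) by (pose proof (Hle_w th ltac:(lra) r); lra).
        rewrite (samep t2 th) by lra. rewrite H. replace (w - w) with 0 by ring. lra.
    + specialize (Hmon th th' a b e). lra.
    + replace (w - w) with 0 by ring. lra.
  - unfold p', q'. destruct Rlt_dec; auto.
    destruct Ex as [th [Hth Hlt]]. specialize (Hmon lo th ltac:(lra) ltac:(lra) ltac:(lra)). lra.
  - set (f := fun th => p th * g th - p' th * g th).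
    destruct (step_int g f lo c hi (c * D) Hc Hg) as [FE FI].
    { intros x Hx. unfold f, p'. destruct Rlt_dec. ring.
      exfalso. pose proof (Q1 x ltac:(lra)). specialize (Hmon x hi ltac:(lra) ltac:(lra) ltac:(lra)). lra. }
    { intros x Hx. unfold f, p'. destruct Rlt_dec.
      pose proof (Q2 x ltac:(lra) r). lra.
      rewrite (samep x hi) by (try lra; specialize (Hmon x hi ltac:(lra) ltac:(lra) ltac:(lra)); lra).
      rewrite HcD. ring. }
    assert (E : forall x, Rmin lo hi < x < Rmax lo hi -> p' x * g x + f x = p x * g x).
    { intros. unfold f. ring. }
    split.
    + apply (@ex_RInt_ext R_NormedModule _ _ lo hi E). apply ex_RInt_plusR; auto.
    + rewrite <- (@RInt_ext R_CompleteNormedModule _ _ lo hi E). rewrite RInt_plusR by auto.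
      rewrite FI. unfold q' in IB. destruct Rlt_dec in IB. lra.
      specialize (HR c Hc).
      assert (D * (c * RInt g c hi) <= D * Rstar) by (apply Rmult_le_compat_l; lra).
      unfold D in *. lra.
Qed.

Lemma cont_RInt_lower (g : R -> R) hi : (forall x, continuous g x) ->
  forall c, continuous (fun a => RInt g a hi) c.
Proof.
  intros Hc c. apply (@ex_derive_continuous R_AbsRing R_NormedModule).
  exists (opp (g c)). apply (is_derive_RInt' g (fun a => RInt g a hi) c hi).
  apply filter_forall. intros a. apply (@RInt_correct R_CompleteNormedModule). apply (@ex_RInt_continuous R_CompleteNormedModule). intros; auto.
  auto.
Qed.

Lemma phi_cont (g : R -> R) hi : (forall x, continuous g x) ->
  forall c, continuity_pt (fun a => a * RInt g a hi) c.
Proof.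
  intros Hc c. apply continuity_pt_filterlim.
  exact (continuous_mult (fun a => a) (fun a => RInt g a hi) c (continuous_id c) (cont_RInt_lower g hi Hc c)).
Qed.

Theorem mainTheorem19 (lo hi : R) (gamma : R -> R)
  (Hlo : 0 < lo) (Hlohi : lo < hi)
  (Hcont : cont_on lo hi gamma)
  (Hpos : forall th, lo <= th <= hi -> 0 < gamma th)
  (Hdens : RInt gamma lo hi = 1)
  (Hhazard : forall th1 th2, lo <= th1 -> th1 < th2 -> th2 < hi ->
     gamma th1 / (1 - cdf lo gamma th1) <= gamma th2 / (1 - cdf lo gamma th2)) :
  exists (ts qs : R -> R),
    admissible lo hi ts qs /\
    (forall t q, admissible lo hi t q -> revenue lo hi gamma t q <= revenue lo hi gamma ts qs) /\
    exists thstar, lo <= thstar <= hi /\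
      (forall th, lo <= th <= thstar -> ts th = 0 /\ qs th = 0) /\
      (forall th, thstar < th <= hi -> ts th = thstar /\ qs th = 1).
Proof.
  set (g := fun y => gamma (clamp lo hi y)).
  assert (Gc : forall x, continuous g x) by (intros x; apply clamp_cont; [lra|exact Hcont]).
  assert (Geq : forall x, lo <= x <= hi -> g x = gamma x).
  { intros x Hx. unfold g. rewrite clamp_id; auto. }
  assert (Hg : ex_RInt g lo hi) by (apply (@ex_RInt_continuous R_CompleteNormedModule); intros; auto).
  assert (H1 : RInt g lo hi = 1).
  { rewrite <- Hdens. apply RInt_ext. intros x Hx. rewrite Rmin_left, Rmax_right in Hx by lra.
    apply Geq; lra. }
  destruct (continuity_ab_maj (fun a => a * RInt g a hi) lo hi ltac:(lra) (fun c _ => phi_cont g hi Gc c))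
    as [ts0 [Hmax Hts0]].
  set (Rstar := ts0 * RInt g ts0 hi).
  set (ts := fun th => if Rlt_dec ts0 th then ts0 else 0).
  set (qs := fun th => if Rlt_dec ts0 th then 1 else 0).
  assert (HR0 : 0 <= Rstar).
  { pose proof (Hmax hi ltac:(lra)). simpl in H.
    assert (Z : RInt g hi hi = 0) by (rewrite RInt_point; reflexivity).
    rewrite Z in H. unfold Rstar. lra. }
  assert (Hrev : revenue lo hi gamma ts qs = Rstar).
  { unfold revenue. destruct (step_int g (fun th => qs th * ts th * gamma th) lo ts0 hi ts0 Hts0 Hg) as [_ E].
    - intros x Hx. unfold qs, ts. destruct Rlt_dec. lra. ring.
    - intros x Hx. unfold qs, ts. destruct Rlt_dec. rewrite Geq by lra. ring. lra.
    - rewrite E. reflexivity. }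
  exists ts, qs. split; [|split].
  - unfold admissible, util, ts, qs. split; [|split; [|split; [|split]]].
    + intros th Hth. destruct Rlt_dec; lra.
    + exists ((ts0, 1) :: (0, 0) :: nil). intros th Hth. destruct Rlt_dec; simpl; auto.
    + intros th th' Hth Hth'. repeat destruct Rlt_dec; lra.
    + intros th Hth. destruct Rlt_dec; lra.
    + intros th Hth. destruct Rlt_dec; lra.
  - intros t q [Hr [[L HL] [HSP [HIR _]]]]. rewrite Hrev.
    destruct (layer lo hi g Rstar Hlohi Hg H1) with (n := length (map snd L)) (l := map snd L)
      (q := q) (p := fun th => q th * t th) as [IE IB].
    + intros c Hc. apply Hmax; auto.
    + lia.
    + intros th Hth. exact (in_map snd L _ (HL th Hth)).
    + intros th Hth. apply Hr; auto.
    + intros th th' a b e. destruct (Req_dec th th'). subst; lra.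
      pose proof (HSP th th' ltac:(lra) ltac:(lra)). pose proof (HSP th' th ltac:(lra) ltac:(lra)).
      unfold util in *. nra.
    + intros th th' a b e.
      pose proof (HSP th th' ltac:(lra) ltac:(lra)). pose proof (HSP th' th ltac:(lra) ltac:(lra)).
      unfold util in *. split; nra.
    + pose proof (HIR lo ltac:(lra)). unfold util in *. nra.
    + unfold revenue. rewrite (RInt_ext _ (fun th => q th * t th * g th)).
      assert (q hi <= 1) by (apply Hr; lra).
      assert (q hi * Rstar <= 1 * Rstar) by (apply Rmult_le_compat_r; lra). lra.
      intros x Hx. rewrite Rmin_left, Rmax_right in Hx by lra. rewrite Geq by lra. reflexivity.
  - exists ts0. split; auto. split.
    + intros th Hth. unfold ts, qs. destruct Rlt_dec; [lra|]. auto.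
    + intros th Hth. unfold ts, qs. destruct Rlt_dec; [|lra]. auto.
Qed.
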